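(* Let $m,n\ge1$. If there exists a KA$(m,n)$ and there exists a pair of orthogonal diagonal Latin squares of order $n$, then there exists an $m$-SCMS$(n)$.
   Context: $I_k=\{0,\dots,k-1\}$. A Kotzig array KA$(m,n)$ is an $m\times n$ array in which each row is a permutation of $\{0,1,\dots,n-1\}$ and all column sums are equal. A Latin square of order $n$ over an $n$-set $S$ is an $n\times n$ array each of whose rows and columns is a permutation of $S$; it is diagonal if its main diagonal $(a_{i,i})$ and back diagonal $(a_{i,n-1-i})$ are also permutations of $S$. Two Latin squares of order $n$ are orthogonal if, when superimposed, each ordered pair of symbols occurs exactly once. An MS$(n)$ is an $n\times n$ matrix with entries exactly $0,\dots,n^2-1$ whose row sums, column sums and two diagonal sums are all equal. $S_2(n)=\frac1n\sum_{k=0}^{n^2-1}k^2$. An $m$-SCMS$(n)$ is a list $B_0,\dots,B_{m-1}$ of (not necessarily distinct) MS$(n)$s, $B_s=(b^{(s)}_{i,j})$, such that $\sum_{s\in I_m}\sum_{j\in I_n}(b^{(s)}_{i,j})^{2}=mS_{2}(n)$ for every $i$, $\sum_{s\in I_m}\sum_{i\in I_n}(b^{(s)}_{i,j})^{2}=mS_{2}(n)$ for every $j$, $\sum_{s}\sum_{i}(b^{(s)}_{i,i})^{2}=mS_{2}(n)$, and $\sum_{s}\sum_{i}(b^{(s)}_{i,n-1-i})^{2}=mS_{2}(n)$. *)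

(* Defs.v *)
From mathcomp Require Import all_boot.
Set Implicit Arguments. Unset Strict Implicit. Unset Printing Implicit Defensive.

Definition kotzig_array (m n : nat) (K : 'I_m -> 'I_n -> 'I_n) : Prop :=
  (forall i, injective (K i)) /\
  (forall j j' : 'I_n, \sum_(i < m) (K i j : nat) = \sum_(i < m) (K i j' : nat)).

Definition latin_square (n : nat) (L : 'I_n -> 'I_n -> 'I_n) : Prop :=
  (forall i, injective (L i)) /\ (forall j, injective (fun i => L i j)).

Definition diagonal_latin_square (n : nat) (L : 'I_n -> 'I_n -> 'I_n) : Prop :=
  latin_square L /\
  injective (fun i => L i i) /\
  injective (fun i => L i (rev_ord i)).

Definition orthogonal (n : nat) (L1 L2 : 'I_n -> 'I_n -> 'I_n) : Prop :=
  injective (fun p : 'I_n * 'I_n => (L1 p.1 p.2, L2 p.1 p.2)).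

Definition magic_square (n : nat) (B : 'I_n -> 'I_n -> nat) : Prop :=
  (forall i j, B i j < n ^ 2) /\
  injective (fun p : 'I_n * 'I_n => B p.1 p.2) /\
  exists c : nat,
    (forall i, \sum_(j < n) B i j = c) /\
    (forall j, \sum_(i < n) B i j = c) /\
    \sum_(i < n) B i i = c /\
    \sum_(i < n) B i (rev_ord i) = c.

(* n * S_2(n) = sum_{k < n^2} k^2, so "X = m S_2(n)" is encoded as
   n * X = m * sum_{k<n^2} k^2 (exactly equivalent, avoids rationals). *)
Definition sum_sq (n : nat) : nat := \sum_(k < n ^ 2) k ^ 2.

Definition scms (m n : nat) (B : 'I_m -> 'I_n -> 'I_n -> nat) : Prop :=
  (forall s, magic_square (B s)) /\
  (forall i, n * (\sum_(s < m) \sum_(j < n) (B s i j) ^ 2) = m * sum_sq n) /\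
  (forall j, n * (\sum_(s < m) \sum_(i < n) (B s i j) ^ 2) = m * sum_sq n) /\
  n * (\sum_(s < m) \sum_(i < n) (B s i i) ^ 2) = m * sum_sq n /\
  n * (\sum_(s < m) \sum_(i < n) (B s i (rev_ord i)) ^ 2) = m * sum_sq n.

(* Main.v *)
Require Import Defs.
From mathcomp Require Import all_boot.
From mathcomp Require Import zify.

Section Aux.
Variable n : nat.

Lemma perm_sum (f : 'I_n -> 'I_n) (g : nat -> nat) :
  injective f -> \sum_(t < n) g (f t) = \sum_(t < n) g t.
Proof. by move=> inj; rewrite [RHS](reindex_inj inj). Qed.

Lemma sum_block (f : nat -> nat) a :
  \sum_(0 <= k < n * a) f k = \sum_(0 <= x < a) \sum_(0 <= y < n) f (n * x + y).
Proof.
elim: a => [|a IH]; first by rewrite muln0 !big_geq.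
rewrite big_nat_recr //= -IH mulnS addnC (big_cat_nat _ (n:=n*a)) ?leq_addr //=.
congr (_ + _).
rewrite -{1}[n * a]add0n big_addn addKn.
by apply: eq_bigr => i _; rewrite addnC.
Qed.

Lemma sum_sq_eq :
  sum_sq n = n * (n * n) * (\sum_(k < n) k ^ 2) + 2 * n * (\sum_(k < n) k) ^ 2
             + n * (\sum_(k < n) k ^ 2).
Proof.
rewrite /sum_sq.
have -> : \sum_(k < n^2) k^2 = \sum_(0<=k<n*n) k^2 by rewrite big_mkord mulnn.
rewrite sum_block big_mkord; under eq_bigr do rewrite big_mkord.
have E : forall x y, (n * x + y) ^ 2 = n * n * x ^ 2 + 2 * n * (x * y) + y ^ 2.
  by move=> x y; rewrite !expnS !expn0; nia.
under eq_bigr do under eq_bigr do rewrite E.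
under eq_bigr do rewrite !big_split /=.
rewrite !big_split /=.
set S := \sum_(k < n) (k : nat). set Q := \sum_(k < n) (k : nat) ^ 2.
have -> : \sum_(i < n) \sum_(j < n) n * n * (i : nat) ^ 2 = n * (n * n * Q).
  under eq_bigr do rewrite sum_nat_const card_ord.
  by rewrite -big_distrr -big_distrr.
have -> : \sum_(i < n) \sum_(j < n) (j : nat) ^ 2 = n * Q.
  by rewrite sum_nat_const card_ord.
have -> : \sum_(i < n) \sum_(j < n) 2 * n * ((i : nat) * j) = 2 * n * (S * S).
  under eq_bigr do rewrite -big_distrr -big_distrr /=.
  by rewrite -big_distrr /= -big_distrl.
rewrite !expnS expn0; nia.
Qed.
End Aux.
Arguments perm_sum {n} [f] g.

Section Main.
Variables (m n : nat) (K : 'I_m -> 'I_n -> 'I_n).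
Hypothesis KA : kotzig_array K.

Lemma line_sum (u v : 'I_n -> 'I_n) s :
  injective u -> injective v ->
  \sum_(t < n) (n * K s (u t) + v t) = n * (\sum_(k < n) k) + \sum_(k < n) k.
Proof.
move=> iu iv; rewrite big_split /= -big_distrr /=.
rewrite (perm_sum (fun k => k) iv).
have ic : injective (fun t => K s (u t)).
  by move=> a b /KA.1 /iu.
by rewrite (perm_sum (fun k => k) ic).
Qed.

Lemma line_sq (x0 : 'I_n) (u v : 'I_n -> 'I_n) :
  injective u -> injective v ->
  n * (\sum_(s < m) \sum_(t < n) (n * K s (u t) + v t) ^ 2) = m * sum_sq n.
Proof.
move=> iu iv.
set c := \sum_(s < m) (K s x0 : nat).
have hc : forall x, \sum_(s < m) (K s x : nat) = c by move=> x; apply: KA.2.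
have hnc : n * c = m * \sum_(k < n) k.
  have : \sum_(x < n) \sum_(s < m) (K s x : nat) = n * c.
    by under eq_bigr do rewrite hc; rewrite sum_nat_const card_ord.
  move<-; rewrite exchange_big /= (eq_bigr (fun _ => \sum_(k < n) (k:nat))).
    by rewrite sum_nat_const card_ord.
  move=> s _.
  have ic : injective (K s) by apply: KA.1.
  exact: (perm_sum (fun k => k) ic).
have E : forall x y, (n * x + y) ^ 2 = n * n * x ^ 2 + 2 * n * (x * y) + y ^ 2.
  by move=> x y; rewrite !expnS !expn0; nia.
under eq_bigr do under eq_bigr do rewrite E.
under eq_bigr do rewrite !big_split /=.
rewrite !big_split /=.
have h1 : \sum_(s < m) \sum_(t < n) n * n * K s (u t) ^ 2
          = m * (n * n * \sum_(k < n) k ^ 2).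
  rewrite -[m in RHS]card_ord -sum_nat_const; apply: eq_bigr => s _.
  rewrite -big_distrr /=; congr (_ * _).
  have ic : injective (fun t => K s (u t)) by move=> a b /KA.1 /iu.
  exact: (perm_sum (fun k => k ^ 2) ic).
have h3 : \sum_(s < m) \sum_(t < n) (v t : nat) ^ 2 = m * \sum_(k < n) k ^ 2.
  rewrite -[m in RHS]card_ord -sum_nat_const; apply: eq_bigr => s _.
  exact: (perm_sum (fun k => k ^ 2) iv).
have h2 : \sum_(s < m) \sum_(t < n) 2 * n * (K s (u t) * v t)
          = 2 * n * (c * \sum_(k < n) k).
  under eq_bigr do rewrite -big_distrr /=.
  rewrite -big_distrr /= exchange_big /=; congr (_ * _).
  under eq_bigr do rewrite -big_distrl /= hc.
  rewrite -big_distrr /=; congr (_ * _).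
  exact: (perm_sum (fun k => k) iv).
rewrite h1 h2 h3 sum_sq_eq.
set S := \sum_(k < n) k. set Q := \sum_(k < n) k ^ 2.
rewrite -/S in hnc.
clearbody c S Q.
have -> : n * (m * (n * n * Q) + 2 * n * (c * S) + m * Q) =
   m * (n * (n * n) * Q) + 2 * n * S * (n * c) + m * (n * Q) by nia.
rewrite hnc; nia.
Qed.
End Main.

Theorem lemma3 (m n : nat) (hm : 1 <= m) (hn : 1 <= n) :
  (exists K : 'I_m -> 'I_n -> 'I_n, kotzig_array K) ->
  (exists L1 L2 : 'I_n -> 'I_n -> 'I_n,
      diagonal_latin_square L1 /\ diagonal_latin_square L2 /\ orthogonal L1 L2) ->
  exists B : 'I_m -> 'I_n -> 'I_n -> nat, scms B.
Proof.
move=> [K KA] [L1 [L2 [[[r1 c1] [d1 a1]] [[[r2 c2] [d2 a2]] ort]]]].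
have x0 : 'I_n by exists 0.
exists (fun s i j => n * K s (L1 i j) + L2 i j).
split.
  move=> s; split.
    move=> i j; have := ltn_ord (K s (L1 i j)); have := ltn_ord (L2 i j).
    move=> h1 h2; nia.
  split.
    move=> [i j] [i' j'] /= E.
    have el : (L2 i j : nat) = L2 i' j'.
      by have := congr1 (modn^~ n) E; rewrite !(mulnC n) !modnMDl !modn_small.
    have ek : (K s (L1 i j) : nat) = K s (L1 i' j').
      by rewrite el in E; apply/eqP; rewrite -(eqn_pmul2l hn); apply/eqP; lia.
    apply: ort => /=; congr (_, _); last exact: val_inj.
    exact: (KA.1 s _ _ (val_inj ek)).
  exists (n * (\sum_(k < n) k) + \sum_(k < n) k).
  split; first by move=> i; exact: (@line_sum _ _ _ KA _ _ s (r1 i) (r2 i)).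
  split; first by move=> j; exact: (@line_sum _ _ _ KA (fun i => L1 i j) (fun i => L2 i j) s (c1 j) (c2 j)).
  split; first by exact: (@line_sum _ _ _ KA (fun i => L1 i i) (fun i => L2 i i) s d1 d2).
  by exact: (@line_sum _ _ _ KA (fun i => L1 i (rev_ord i)) (fun i => L2 i (rev_ord i)) s a1 a2).
split; first by move=> i; exact: (@line_sq _ _ _ KA x0 _ _ (r1 i) (r2 i)).
split; first by move=> j; exact: (@line_sq _ _ _ KA x0 (fun i => L1 i j) (fun i => L2 i j) (c1 j) (c2 j)).
split; first by exact: (@line_sq _ _ _ KA x0 (fun i => L1 i i) (fun i => L2 i i) d1 d2).
by exact: (@line_sq _ _ _ KA x0 (fun i => L1 i (rev_ord i)) (fun i => L2 i (rev_ord i)) a1 a2).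
Qed.
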